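(* Let $H$ be an undirected graph and let $\vec H$ be any acyclic orientation of $H$. Then $\mathrm{dtw}(\vec H)\le\mathrm{tw}(H)+1$.
   Context: For a DAG $\vec H$, a source is a vertex of in-degree $0$; $S$ denotes the set of sources; $R(s)$ is the set of vertices reachable from $s$, and $R(B)=\bigcup_{s\in B}R(s)$. A DAG tree decomposition of $\vec H$ is a tree $T$ whose nodes (bags) are subsets of $S$ such that every source lies in some bag and, for any bags $B,B_1,B_2$ with $B$ on the path between $B_1$ and $B_2$ in $T$, $R(B_1)\cap R(B_2)\subseteq R(B)$; its width is the maximum bag size and $\mathrm{dtw}(\vec H)$ is the minimum width. $\mathrm{tw}$ is the usual treewidth. *)

(* Defs.v *)
From mathcomp Require Import all_boot.
Set Implicit Arguments. Unset Strict Implicit. Unset Printing Implicit Defensive.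

Definition undirected_graph (V : finType) (e : rel V) : Prop :=
  symmetric e /\ irreflexive e.

Definition orientation (V : finType) (e d : rel V) : Prop :=
  (forall x y, e x y = d x y || d y x) /\ (forall x y, d x y -> ~~ d y x).

Definition acyclic_digraph (V : finType) (d : rel V) : Prop :=
  forall x y, d x y -> ~~ connect d y x.

Definition is_tree (I : finType) (t : rel I) : Prop :=
  [/\ 0 < #|I|, symmetric t, irreflexive t,
      (forall i j, connect t i j) &
      (forall x p, uniq (x :: p) -> path t x p -> 2 <= size p ->
                   ~~ t (last x p) x)].

Definition on_tree_path (I : finType) (t : rel I) (i j k : I) : Prop :=
  exists p : seq I,
    [/\ path t i p, last i p = j, uniq (i :: p) & k \in i :: p].

Definition tree_decomposition (V : finType) (e : rel V)
    (I : finType) (t : rel I) (bag : I -> {set V}) : Prop :=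
  [/\ is_tree t,
      (forall v, exists i, v \in bag i),
      (forall u v, e u v -> exists i, (u \in bag i) && (v \in bag i)) &
      (forall i j k, on_tree_path t i j k -> bag i :&: bag j \subset bag k)].

(* width = maximum bag size minus one;  tw_le e k  <->  tw(e) <= k *)
Definition tw_le (V : finType) (e : rel V) (k : nat) : Prop :=
  exists (I : finType) (t : rel I) (bag : I -> {set V}),
    tree_decomposition e t bag /\ forall i, #|bag i| <= k.+1.

Definition is_source (V : finType) (d : rel V) (s : V) : bool :=
  [forall x, ~~ d x s].

Definition sources (V : finType) (d : rel V) : {set V} :=
  [set s | is_source d s].

Definition reach (V : finType) (d : rel V) (s : V) : {set V} :=
  [set v | connect d s v].

Definition reachB (V : finType) (d : rel V) (B : {set V}) : {set V} :=
  \bigcup_(s in B) reach d s.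

Definition dag_tree_decomposition (V : finType) (d : rel V)
    (I : finType) (t : rel I) (bag : I -> {set V}) : Prop :=
  [/\ is_tree t,
      (forall i, bag i \subset sources d),
      (forall s, s \in sources d -> exists i, s \in bag i) &
      (forall i j k, on_tree_path t i j k ->
         reachB d (bag i) :&: reachB d (bag j) \subset reachB d (bag k))].

(* width = maximum bag size;  dtw_le d k  <->  dtw(d) <= k *)
Definition dtw_le (V : finType) (d : rel V) (k : nat) : Prop :=
  exists (I : finType) (t : rel I) (bag : I -> {set V}),
    dag_tree_decomposition d t bag /\ forall i, #|bag i| <= k.

(* Main.v *)
Require Import Defs.
From mathcomp Require Import all_boot.
Set Implicit Arguments. Unset Strict Implicit.

Lemma catc (T : Type) (x : T) s1 s2 : x :: s1 ++ s2 = (x :: s1) ++ s2.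
Proof. by []. Qed.

Section TreeLemma.
Variables (I : finType) (t : rel I).
Hypothesis Hsym : symmetric t.

Lemma tpA i p i' k : path t i p -> uniq (i::p) -> k \in i::p -> i' \in i::p ->
  (exists r, [/\ path t i r, last i r = i', uniq (i::r), k \in i::r & {subset i::r <= i::p}]) \/
  (exists r, [/\ path t i' r, last i' r = last i p, uniq (i'::r), k \in i'::r & {subset i'::r <= i::p}]).
Proof.
move=> Hp Hu Hk Hi'; case/splitPl: Hi' Hp Hu Hk => p1 p2 Hl.
rewrite cat_path => /andP[Hp1 Hp2].
rewrite catc cat_uniq => /and3P[Hu1 Hdis Hu2].
have Hi'1 : i' \in i :: p1 by rewrite -Hl mem_last.
rewrite mem_cat => /orP[Hk1|Hk2].
  left; exists p1; split => // z Hz; by rewrite mem_cat Hz.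
right; exists p2; split.
- by rewrite -Hl.
- by rewrite last_cat Hl.
- rewrite /= Hu2 andbT; apply/negP => Hin; move/hasP: Hdis; apply; by exists i'.
- by rewrite inE Hk2 orbT.
- move=> z; rewrite inE => /orP[/eqP->|Hz]; rewrite mem_cat ?Hi'1 //.
  by rewrite Hz orbT.
Qed.

Lemma tpB i p k : path t i p -> uniq (i::p) -> k \in i::p ->
  forall q i', path t i' q -> uniq (i'::q) -> last i' q \in i::p ->
  (exists r, [/\ path t i r, last i r = i', uniq (i::r), k \in i::r & {subset i::r <= i::p ++ i'::q}]) \/
  (exists r, [/\ path t i' r, last i' r = last i p, uniq (i'::r), k \in i'::r & {subset i'::r <= i::p ++ i'::q}]).
Proof.
move=> Hp Hu Hk; elim=> [|x q IH] i' Hq Huq Hl.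
  case: (tpA Hp Hu Hk Hl) => [[r [H1 H2 H3 H4 H5]]|[r [H1 H2 H3 H4 H5]]].
    left; exists r; split => // z /H5 Hz; by rewrite catc mem_cat Hz.
  right; exists r; split => // z /H5 Hz; by rewrite catc mem_cat Hz.
case Hi': (i' \in i :: p).
  case: (tpA Hp Hu Hk Hi') => [[r [H1 H2 H3 H4 H5]]|[r [H1 H2 H3 H4 H5]]].
    left; exists r; split => // z /H5 Hz; by rewrite catc mem_cat Hz.
  right; exists r; split => // z /H5 Hz; by rewrite catc mem_cat Hz.
case/andP: Hq => Hix Hq.
move: Huq; rewrite cons_uniq => /andP[Hni' Huq].
have Hsub : forall z, z \in i :: p ++ x :: q -> z \in i :: p ++ i' :: x :: q.
  move=> z; rewrite !catc !mem_cat => /orP[->//|Hz]; apply/orP; right; by rewrite in_cons Hz orbT.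
have Hnot : forall s : seq I, {subset s <= i :: p ++ x :: q} -> i' \notin s.
  move=> s Hs; apply/negP => /Hs; rewrite catc mem_cat Hi' /=.
  by apply/negP.
case: (IH x Hq Huq Hl) => [[r [H1 H2 H3 H4 H5]]|[r [H1 H2 H3 H4 H5]]].
  left; exists (rcons r i'); split.
  - by rewrite rcons_path H1 H2 Hsym.
  - by rewrite last_rcons.
  - by rewrite -rcons_cons rcons_uniq H3 (Hnot _ H5).
  - by rewrite -rcons_cons mem_rcons inE H4 orbT.
  - move=> z; rewrite -rcons_cons mem_rcons inE => /orP[/eqP->|/H5/Hsub//].
    by rewrite catc mem_cat; apply/orP; right; rewrite in_cons eqxx.
right; exists (x :: r); split.
- by rewrite /= Hix H1.
- by [].
- by rewrite cons_uniq H3 andbT; apply: Hnot.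
- by rewrite inE H4 orbT.
- move=> z; rewrite inE => /orP[/eqP->|/H5/Hsub//].
  by rewrite catc mem_cat; apply/orP; right; rewrite in_cons eqxx.
Qed.

Lemma tp_split i j k i' : (forall a b, connect t a b) -> on_tree_path t i j k ->
  on_tree_path t i i' k \/ on_tree_path t i' j k.
Proof.
move=> Hc [p [Hp Hl Hu Hk]].
move: (Hc i' j) => /connectP [q0 Hq0 Hl0].
case: (shortenP Hq0) Hl0 => q Hq Huq _ Hl0.
have Hlq : last i' q \in i :: p by rewrite -Hl0 -Hl mem_last.
case: (tpB Hp Hu Hk Hq Huq Hlq) => [[r [H1 H2 H3 H4 _]]|[r [H1 H2 H3 H4 _]]].
  by left; exists r.
by right; exists r; rewrite H2 Hl.
Qed.
End TreeLemma.

Lemma source_reach (V : finType) (d : rel V) y z :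
  connect d y z -> is_source d z -> y = z.
Proof.
case/connectP => p Hp ->; case/lastP: p Hp => [//|p x].
rewrite rcons_path last_rcons => /andP[_ Hd] /forallP H.
by move: (H (last y p)); rewrite Hd.
Qed.

Theorem mainTheorem14 (V : finType) (e d : rel V) :
  undirected_graph e -> orientation e d -> acyclic_digraph d ->
  forall k : nat, tw_le e k -> dtw_le d k.+1.
Proof.
move=> [esym eirr] [eo dasym] dacyc k [I [t [bag [[Htree Hcov Hedge Hint] Hsize]]]].
have Htree' := Htree; case: Htree' => _ tsym _ tconn _.
have Hex : forall w, exists y, connect d y w && is_source d y.
  move=> w; pose anc y := [set z | connect d z y].
  have P0 : connect d w w := connect0 _ _.
  case: (@arg_minnP _ w (fun y => connect d y w) (fun y => #|anc y|) P0) => y Hyw Hmin.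
  exists y; rewrite Hyw /=; apply/forallP => x; apply/negP => Hxy.
  have Hlt : #|anc x| < #|anc y|.
    apply: proper_card; apply/properP; split.
      apply/subsetP => z; rewrite !inE => Hzx; exact: connect_trans Hzx (connect1 Hxy).
    exists y; rewrite !inE ?connect0 //; exact: dacyc Hxy.
  have := Hmin x (connect_trans (connect1 Hxy) Hyw).
  by rewrite leqNgt Hlt.
pose sP w y := connect d y w && is_source d y.
pose s w := [arg min_(y < xchoose (Hex w) | sP w y) enum_rank y].
have Hs : forall w, sP w (s w) /\ forall z, sP w z -> enum_rank (s w) <= enum_rank z.
  move=> w; rewrite /s; case: arg_minnP; first exact: xchooseP.
  by move=> y Hy Hm; split.
have sfix : forall z, is_source d z -> s z = z.
  move=> z Hz; have [/andP[Hc _] _] := Hs z; exact: source_reach Hc Hz.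
have F2 : forall a w, connect d (s a) w -> connect d w a -> s w = s a.
  move=> a w H1 H2; apply/enum_rank_inj/val_inj/eqP; rewrite /= eqn_leq.
  have [/andP[Ha Hsa] Hma] := Hs a; have [/andP[Hw Hsw] Hmw] := Hs w.
  rewrite Hmw /=; last by rewrite /sP H1 Hsa.
  by rewrite Hma // /sP (connect_trans Hw H2) Hsw.
exists I, t, (fun i => s @: bag i); split; last first.
  by move=> i; apply: leq_trans (leq_imset_card _ _) (Hsize i).
split => //.
- move=> i; apply/subsetP => x /imsetP[w _ ->]; rewrite inE.
  by have [/andP[_ ->] _] := Hs w.
- move=> z; rewrite inE => Hz; case: (Hcov z) => i Hi; exists i.
  by rewrite -{1}(sfix z Hz) imset_f.
move=> i j kk Hpt; apply/subsetP => v; rewrite inE.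
case/andP => /bigcupP[xx Hx Hxv] /bigcupP[yy Hy Hyv].
case/imsetP: Hx Hxv => a Ha -> Hav; case/imsetP: Hy Hyv => b Hb -> Hbv.
rewrite inE in Hav; rewrite inE in Hbv.
pose G w := connect d (s w) v.
pose e' := [rel x y | e x y && G x && G y].
have L : forall u1 u2, connect d u1 u2 ->
    (forall w, connect d u1 w -> connect d w u2 -> G w) -> connect e' u1 u2.
  move=> u1 u2 /connectP[p Hp ->]; elim: p u1 Hp => [|x p IH] u1 Hp HG.
    exact: connect0.
  case/andP: Hp => Hux Hp.
  have Hl : connect d x (last x p) by apply/connectP; exists p.
  apply: (connect_trans (connect1 _) (IH x Hp _)).
    rewrite /= (eo u1 x) Hux /= HG ?connect0 //=; last exact: connect_trans (connect1 Hux) Hl.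
    exact: HG (connect1 Hux) Hl.
  move=> w Hxw Hwl; apply: HG => //; exact: connect_trans (connect1 Hux) Hxw.
have esym' : symmetric e'.
  move=> x1 y1; rewrite /= esym; by case: (G x1); case: (G y1); rewrite /= ?andbT ?andbF.
have Csym := sym_connect_sym esym'.
have Gdown : forall w, connect d w v -> G w.
  move=> w Hwv; have [/andP[Hw _] _] := Hs w; exact: connect_trans Hw Hwv.
have Cab : connect e' a b.
  have Hsa : connect e' (s a) a.
    have [/andP[Hw _] _] := Hs a.
    apply: L Hw _ => w H1 H2; rewrite /G (F2 a w H1 H2); exact: Hav.
  have Hsb : connect e' (s b) b.
    have [/andP[Hw _] _] := Hs b.
    apply: L Hw _ => w H1 H2; rewrite /G (F2 b w H1 H2); exact: Hbv.
  have Hav' : connect e' (s a) v by apply: L Hav _ => w _; exact: Gdown.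
  have Hbv' : connect e' (s b) v by apply: L Hbv _ => w _; exact: Gdown.
  rewrite Csym in Hsa; rewrite Csym in Hbv'.
  exact: connect_trans (connect_trans Hsa Hav') (connect_trans Hbv' Hsb).
have Sep : forall ws w i j, path e' w ws -> G w -> w \in bag i ->
    last w ws \in bag j -> on_tree_path t i j kk -> exists2 u, G u & u \in bag kk.
  elim=> [|x ws IH] w i1 j1 Hp Gw Hwi Hwj Hpt1.
    exists w => //; move/subsetP: (Hint _ _ _ Hpt1) => /(_ w); apply; by rewrite inE Hwi Hwj.
  case/andP: Hp => /andP[/andP[Hexx _] Gx] Hp.
  case: (Hedge _ _ Hexx) => i' /andP[Hwi' Hxi'].
  case: (tp_split tsym i' tconn Hpt1) => Hpt'.
    exists w => //; move/subsetP: (Hint _ _ _ Hpt') => /(_ w); apply; by rewrite inE Hwi Hwi'.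
  exact: IH x i' j1 Hp Gx Hxi' Hwj Hpt'.
case/connectP: Cab => p Hp Hbl.
have Ga : G a by rewrite /G; exact: Hav.
case: (Sep p a i j Hp Ga Ha _ Hpt); first by rewrite -Hbl.
move=> u Gu Hu; apply/bigcupP; exists (s u); first exact: imset_f.
by rewrite inE.
Qed.
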